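(* Let $n\geq1$ be an integer, $p>1$, $q=pe^{2\pi i/n}$, and let $A=\{a_1,\dots,a_m\}\subset\mathbb R$ with $a_1<a_2<\cdots<a_m$. Let $X_{n,p}=\{\sum_{k=0}^{n-1}x_kq^k\mid x_k\in\{0,1\}\}$ and $P_{n,p}=\mathrm{conv}(X_{n,p})$. If $$\max_{i=1,\dots,m-1}(a_{i+1}-a_i)\leq\frac{\max A-\min A}{p^n-1},$$ then every $$x\in\frac{\max A-\min A}{p^n-1}\,P_{n,p}+\frac{1}{p^n-1}\sum_{k=0}^{n-1}(\min A)\,q^k$$ has a representation in base $q$ with alphabet $A$, i.e. there is a sequence $(x_j)_{j\geq1}$ with $x_j\in A$ and $x=\sum_{j=1}^\infty x_jq^{-j}$.
   Context: $\mathrm{conv}$ denotes convex hull in $\mathbb C\cong\mathbb R^2$; for $Y\subset\mathbb C$, $c\in\mathbb R$, $d\in\mathbb C$: $cY+d=\{cy+d\mid y\in Y\}$. *)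

(* Defs.v *)
From Stdlib Require Import Reals List.
From Coquelicot Require Import Coquelicot.
Open Scope R_scope.

Definition conv (S : C -> Prop) (z : C) : Prop :=
  exists l : list (R * C),
    List.Forall (fun w => 0 <= fst w /\ S (snd w)) l /\
    List.fold_right Rplus 0 (List.map fst l) = 1 /\
    z = List.fold_right Cplus 0%C (List.map (fun w => Cmult (RtoC (fst w)) (snd w)) l).

(* q = p e^{2 pi i / n}, written via Euler's formula *)
Definition qbase (n : nat) (p : R) : C :=
  (p * cos (2 * PI / INR n), p * sin (2 * PI / INR n)).

Definition Csum (n : nat) (f : nat -> C) : C :=
  List.fold_right Cplus 0%C (List.map f (List.seq 0 n)).

Definition Xset (n : nat) (p : R) (z : C) : Prop :=
  exists x : nat -> R, (forall k, x k = 0 \/ x k = 1) /\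
    z = Csum n (fun k => Cmult (RtoC (x k)) (Cpow (qbase n p) k)).

Definition Pset (n : nat) (p : R) : C -> Prop := conv (Xset n p).

(* Main.v *)
Require Import Defs.
From Stdlib Require Import Reals List Lia Lra Classical ClassicalEpsilon.
From Coquelicot Require Import Coquelicot.
Open Scope R_scope.


Lemma fold_Cplus_app (l : list C) (c : C) :
  fold_right Cplus c l = Cplus (fold_right Cplus 0%C l) c.
Proof. induction l; simpl. - ring. - rewrite IHl. ring. Qed.

Lemma Csum_S n f : Csum (S n) f = Cplus (Csum n f) (f n).
Proof.
  unfold Csum. rewrite seq_S, map_app, fold_right_app. simpl.
  rewrite fold_Cplus_app. f_equal. ring.
Qed.

Lemma Csum_0 f : Csum 0 f = 0%C.
Proof. reflexivity. Qed.

Lemma Csum_ext n f g : (forall k, (k < n)%nat -> f k = g k) -> Csum n f = Csum n g.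
Proof.
  induction n; intros H. reflexivity.
  rewrite !Csum_S, IHn, H; auto.
Qed.

Lemma Csum_shift n f : Csum (S n) f = Cplus (f 0%nat) (Csum n (fun k => f (S k))).
Proof.
  induction n. rewrite Csum_S, !Csum_0. ring.
  rewrite Csum_S, IHn, Csum_S. ring.
Qed.

Lemma Csum_plus n f g : Csum n (fun k => Cplus (f k) (g k)) = Cplus (Csum n f) (Csum n g).
Proof. induction n. rewrite !Csum_0; ring. rewrite !Csum_S, IHn. ring. Qed.

Lemma Csum_scal n c f : Cmult c (Csum n f) = Csum n (fun k => Cmult c (f k)).
Proof. induction n. rewrite !Csum_0; ring. rewrite !Csum_S, <- IHn. ring. Qed.

Lemma Csum_zero n : Csum n (fun _ => 0%C) = 0%C.
Proof. induction n. reflexivity. rewrite Csum_S, IHn. ring. Qed.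

Lemma Csum_bound n f B : (forall k, (k < n)%nat -> Cmod (f k) <= B) ->
  Cmod (Csum n f) <= INR n * B.
Proof.
  induction n; intros H. rewrite Csum_0, Cmod_0. simpl; lra.
  rewrite Csum_S, S_INR. eapply Rle_trans. apply Cmod_triangle.
  specialize (IHn (fun k Hk => H k (Nat.lt_lt_succ_r _ _ Hk))). specialize (H n (Nat.lt_succ_diag_r n)).
  lra.
Qed.

Lemma demoivre r a k : Cpow (r * cos a, r * sin a) k = (r ^ k * cos (INR k * a), r ^ k * sin (INR k * a)).
Proof.
  induction k; simpl Cpow.
  - simpl. rewrite Rmult_0_l, cos_0, sin_0. apply injective_projections; simpl; ring.
  - rewrite IHk, S_INR, Rmult_plus_distr_r, Rmult_1_l, cos_plus, sin_plus.
    apply injective_projections; simpl; ring.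
Qed.

Lemma qpow_n n p : (1 <= n)%nat -> Cpow (qbase n p) n = RtoC (p ^ n).
Proof.
  intros Hn. unfold qbase. rewrite demoivre.
  replace (INR n * (2 * PI / INR n)) with (2 * PI).
  rewrite cos_2PI, sin_2PI. apply injective_projections; simpl; ring.
  field. apply not_0_INR. lia.
Qed.

Lemma Cmod_q n p : 0 < p -> Cmod (qbase n p) = p.
Proof.
  intros Hp. unfold qbase, Cmod. cbn [fst snd].
  replace ((p * cos (2 * PI / INR n)) ^ 2 + (p * sin (2 * PI / INR n)) ^ 2) with (p ^ 2).
  apply sqrt_pow2; lra.
  rewrite <- (Rmult_1_r (p ^ 2)) at 1. rewrite <- (sin2_cos2 (2 * PI / INR n)).
  unfold Rsqr. ring.
Qed.


Lemma sorted_le (a : list R) :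
  (forall i, (S i < length a)%nat -> nth i a 0 < nth (S i) a 0) ->
  forall i j, (j < length a)%nat -> (i <= j)%nat -> nth i a 0 <= nth j a 0.
Proof.
  intros Hs i j. induction j; intros Hj Hij.
  - replace i with 0%nat by lia. lra.
  - destruct (Nat.eq_dec i (S j)). subst; lra.
    specialize (IHj ltac:(lia) ltac:(lia)). specialize (Hs j Hj). lra.
Qed.

Lemma find_digit (a : list R) (D v : R) :
  (1 <= length a)%nat ->
  (forall i, (S i < length a)%nat -> nth (S i) a 0 - nth i a 0 <= D) ->
  nth 0 a 0 <= v -> v - D <= nth (length a - 1) a 0 ->
  exists i, (i < length a)%nat /\ v - D <= nth i a 0 <= v.
Proof.
  intros Hm Hg H0 H1.
  assert (forall k, (k < length a)%nat ->
    (exists i, (i < length a)%nat /\ v - D <= nth i a 0 <= v) \/ nth k a 0 <= v).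
  { induction k; intros Hk. right; auto.
    destruct (IHk ltac:(lia)) as [H|H]. left; auto.
    destruct (Rle_lt_dec (v - D) (nth k a 0)).
    left. exists k. split. lia. lra.
    right. specialize (Hg k Hk). lra. }
  destruct (H (length a - 1)%nat ltac:(lia)) as [H'|H']. auto.
  exists (length a - 1)%nat. split. lia. lra.
Qed.

Lemma digit_fun (a : list R) (b : R) :
  (1 <= length a)%nat -> 1 < b ->
  (forall i, (S i < length a)%nat ->
     nth (S i) a 0 - nth i a 0 <= (nth (length a - 1) a 0 - nth 0 a 0) / (b - 1)) ->
  exists f : R -> R, forall v,
    nth 0 a 0 / (b - 1) <= v <= nth (length a - 1) a 0 / (b - 1) ->
    In (f v) a /\ nth 0 a 0 / (b - 1) <= b * v - f v <= nth (length a - 1) a 0 / (b - 1).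
Proof.
  intros Hm Hb Hg.
  set (mn := nth 0 a 0) in *. set (mx := nth (length a - 1) a 0) in *.
  set (L := mn / (b - 1)). set (U := mx / (b - 1)).
  assert (HL : L * (b - 1) = mn) by (unfold L; field; lra).
  assert (HU : U * (b - 1) = mx) by (unfold U; field; lra).
  assert (HD : (mx - mn) / (b - 1) = U - L) by (unfold U, L; field; lra).
  rewrite HD in Hg.
  assert (E : forall v, exists c, L <= v <= U -> In c a /\ L <= b * v - c <= U).
  { intros v. destruct (classic (L <= v <= U)) as [Hv|Hv].
    2:{ exists 0. tauto. }
    destruct (find_digit a (U - L) (b * v - L) Hm Hg) as [i [Hi Hc]].
    - assert (b * v >= b * L) by nra. fold mn. nra.
    - assert (b * v <= b * U) by nra. fold mx. nra.
    - exists (nth i a 0). intros _. split. apply nth_In; auto. lra. }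
  exists (fun v => proj1_sig (constructive_indefinite_description _ (E v))).
  intros v. exact (proj2_sig (constructive_indefinite_description _ (E v))).
Qed.


Lemma conv_coords n p (l : list (R * C)) :
  List.Forall (fun w => 0 <= fst w /\ Xset n p (snd w)) l ->
  exists t : nat -> R, (forall k, 0 <= t k <= fold_right Rplus 0 (map fst l)) /\
    fold_right Cplus 0%C (map (fun w => Cmult (RtoC (fst w)) (snd w)) l) =
    Csum n (fun k => Cmult (RtoC (t k)) (Cpow (qbase n p) k)).
Proof.
  induction l as [|[lam z] l IH]; intros HF.
  - exists (fun _ => 0). split. simpl; intros; lra.
    simpl. symmetry. rewrite (Csum_ext _ _ (fun _ => 0%C)). apply Csum_zero. intros. ring.
  - inversion HF as [|? ? [Hl [x [Hx Hz]]] HF']; subst. simpl in *.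
    destruct (IH HF') as [t [Ht Heq]].
    exists (fun k => lam * x k + t k). split.
    + intros k. specialize (Ht k). destruct (Hx k) as [E|E]; rewrite E; split; nra.
    + rewrite Heq, Hz, Csum_scal, <- Csum_plus. apply Csum_ext. intros k _.
      rewrite RtoC_plus, RtoC_mult. ring.
Qed.

Fixpoint state (n : nat) (b : R) (f : R -> R) (s0 : nat -> R) (j : nat) : nat -> R :=
  match j with
  | O => s0
  | S j' => fun k => match k with
            | O => b * state n b f s0 j' (n - 1)%nat - f (state n b f s0 j' (n - 1)%nat)
            | S k' => state n b f s0 j' k'
            end
  end.

Lemma state_rec n p f s0 j : (1 <= n)%nat ->
  let q := qbase n p in
  Csum n (fun k => Cmult (RtoC (state n (p ^ n) f s0 (S j) k)) (Cpow q k)) =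
  Cminus (Cmult q (Csum n (fun k => Cmult (RtoC (state n (p ^ n) f s0 j k)) (Cpow q k))))
         (RtoC (f (state n (p ^ n) f s0 j (n - 1)%nat))).
Proof.
  intros Hn q.
  assert (Hq : Cpow q n = RtoC (p ^ n)) by (apply qpow_n; lia).
  set (b := p ^ n) in *. set (s := state n b f s0 j).
  assert (E0 : state n b f s0 (S j) 0%nat = b * s (n - 1)%nat - f (s (n - 1)%nat)) by reflexivity.
  assert (ES : forall k, state n b f s0 (S j) (S k) = s k) by reflexivity.
  destruct n as [|n']. lia.
  replace (S n' - 1)%nat with n' in * by lia.
  rewrite Csum_shift, E0.
  rewrite (Csum_ext n' _ (fun k => Cmult (RtoC (s k)) (Cpow q (S k)))).
  2:{ intros. rewrite ES. reflexivity. }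
  rewrite Csum_S, Cmult_plus_distr_l, Csum_scal.
  rewrite (Csum_ext n' (fun k => Cmult q (Cmult (RtoC (s k)) (Cpow q k)))
     (fun k => Cmult (RtoC (s k)) (Cpow q (S k)))).
  2:{ intros. simpl. ring. }
  replace (Cmult q (Cmult (RtoC (s n')) (Cpow q n')))
    with (Cmult (RtoC (s n')) (Cpow q (S n'))) by (simpl; ring).
  rewrite Hq. simpl (Cpow q 0). rewrite RtoC_minus, RtoC_mult. ring.
Qed.


Theorem corollary4p7 (n : nat) (p : R) (a : list R) :
  (1 <= n)%nat -> 1 < p ->
  (1 <= length a)%nat ->
  (forall i, (S i < length a)%nat -> nth i a 0 < nth (S i) a 0) ->
  let m := length a in
  let minA := nth 0 a 0 in
  let maxA := nth (m - 1) a 0 in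
  let q := qbase n p in
  (forall i, (S i < m)%nat ->
     nth (S i) a 0 - nth i a 0 <= (maxA - minA) / (p ^ n - 1)) ->
  forall x : C,
    (exists y : C, Pset n p y /\
       x = Cplus (Cmult (RtoC ((maxA - minA) / (p ^ n - 1))) y)
                 (Cmult (RtoC (1 / (p ^ n - 1))) (Csum n (fun k => Cmult (RtoC minA) (Cpow q k))))) ->
    exists d : nat -> R,
      (forall j, In (d j) a) /\
      is_series (fun j : nat => Cmult (RtoC (d j)) (Cinv (Cpow q (S j)))) x.
Proof.
  intros Hn Hp Hm Hs m minA maxA q Hg x [y [Hy Hx]].
  assert (Hb : 1 < p ^ n).
  { destruct n. lia. simpl. assert (1 <= p ^ n) by (apply pow_R1_Rle; lra). nra. }
  set (b := p ^ n) in *.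
  assert (Hmm : minA <= maxA) by (apply sorted_le; auto; unfold m; lia).
  destruct (digit_fun a b Hm Hb Hg) as [f Hf].
  fold m minA maxA in Hf.
  set (L := minA / (b - 1)) in *. set (U := maxA / (b - 1)) in *.
  set (del := (maxA - minA) / (b - 1)) in *.
  assert (HdL : del = U - L) by (unfold del, U, L; field; lra).
  destruct Hy as [l [HF [H1 Hyl]]].
  destruct (conv_coords n p l HF) as [t [Ht Ht2]].
  rewrite H1 in Ht. rewrite Hyl, Ht2 in Hx. clear Hyl Ht2 H1 HF.
  set (s0 := fun k => del * t k + L).
  set (st := state n b f s0).
  assert (Hinv : forall j k, L <= st j k <= U).
  { intros j. induction j; intros k.
    - unfold st; simpl. unfold s0. specialize (Ht k). assert (0 <= del) by (unfold del; apply Rdiv_le_0_compat; lra). nra.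
    - destruct k. unfold st; simpl state. apply Hf. apply IHj.
      apply IHj. }
  set (d := fun j => f (st j (n - 1)%nat)).
  exists d. split.
  { intros j. apply Hf. apply Hinv. }
  set (r := fun j => Csum n (fun k => Cmult (RtoC (st j k)) (Cpow q k))).
  assert (Hr0 : x = r 0%nat).
  { rewrite Hx. unfold r, st. simpl state. rewrite !Csum_scal, <- Csum_plus. apply Csum_ext.
    intros k _. unfold s0. replace L with (1 / (b - 1) * minA) by (unfold L; field; lra).
    unfold q. rewrite RtoC_plus, !RtoC_mult. ring. }
  assert (Hrec : forall j, r (S j) = Cminus (Cmult q (r j)) (RtoC (d j))).
  { intros j. apply state_rec. auto. }
  assert (Hqk : forall k, Cmod (Cpow q k) = p ^ k).
  { intros k. rewrite Cmod_pow. unfold q. rewrite Cmod_q; lra. }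
  assert (Hq0 : forall k, Cpow q k <> 0%C).
  { intros k E. assert (Cmod (Cpow q k) = 0) by (rewrite E; apply Cmod_0).
    rewrite Hqk in H. assert (0 < p ^ k) by (apply pow_lt; lra). lra. }
  assert (Hqn0 : q <> 0%C) by exact (fun E => Hq0 1%nat ltac:(simpl; rewrite E; ring)).
  assert (HE : forall N, x = Cplus (Csum N (fun j => Cmult (RtoC (d j)) (Cinv (Cpow q (S j)))))
                               (Cmult (Cinv (Cpow q N)) (r N))).
  { induction N.
    - rewrite Csum_0. simpl. rewrite Hr0. field.
    - rewrite IHN, Csum_S, Hrec. simpl Cpow. field. split; auto. }
  set (M := Rabs L + Rabs U).
  set (B := INR n * (M * p ^ n)).
  assert (HB0 : 0 <= B).
  { unfold B, M. apply Rmult_le_pos. apply pos_INR. apply Rmult_le_pos.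
    generalize (Rabs_pos L) (Rabs_pos U); lra. apply pow_le; lra. }
  assert (Hrb : forall j, Cmod (r j) <= B).
  { intros j. apply Csum_bound. intros k Hk. rewrite Cmod_mult, Cmod_R, Hqk.
    assert (Rabs (st j k) <= M).
    { specialize (Hinv j k). unfold M. unfold Rabs; repeat destruct Rcase_abs; lra. }
    assert (p ^ k <= p ^ n) by (apply Rle_pow; lra || lia).
    assert (0 <= p ^ k) by (apply pow_le; lra).
    apply Rmult_le_compat; auto. apply Rabs_pos. }
  unfold is_series. apply filterlim_locally. intros eps.
  assert (Hp1 : Rabs (/ p) < 1).
  { rewrite Rabs_pos_eq. apply (Rmult_lt_reg_l p); [lra|]. rewrite Rinv_r; lra. left; apply Rinv_0_lt_compat; lra. }
  assert (He : 0 < eps / (B + 1)) by (apply Rdiv_lt_0_compat; [apply cond_pos | lra]).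
  destruct (pow_lt_1_zero (/ p) Hp1 _ He) as [N0 HN0].
  exists N0. intros N HN.
  apply norm_compat1.
  change (Cmod (Cminus (sum_n (fun j => Cmult (RtoC (d j)) (Cinv (Cpow q (S j)))) N) x) < eps).
  assert (Hsum : forall N, sum_n (fun j => Cmult (RtoC (d j)) (Cinv (Cpow q (S j)))) N =
                      Csum (S N) (fun j => Cmult (RtoC (d j)) (Cinv (Cpow q (S j))))).
  { intros K. induction K. rewrite sum_O, Csum_S, Csum_0. simpl. ring.
    rewrite sum_Sn, IHK, (Csum_S (S K)). reflexivity. }
  rewrite Hsum, (HE (S N)).
  replace (Cminus (Csum (S N) (fun j => Cmult (RtoC (d j)) (Cinv (Cpow q (S j)))))
      (Cplus (Csum (S N) (fun j => Cmult (RtoC (d j)) (Cinv (Cpow q (S j)))))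
         (Cmult (Cinv (Cpow q (S N))) (r (S N)))))
    with (Copp (Cmult (Cinv (Cpow q (S N))) (r (S N)))) by ring.
  rewrite Cmod_opp, Cmod_mult, Cmod_inv by auto. rewrite Hqk.
  specialize (HN0 (S N) ltac:(lia)). rewrite pow_inv in HN0.
  rewrite Rabs_pos_eq in HN0 by (left; apply Rinv_0_lt_compat, pow_lt; lra).
  specialize (Hrb (S N)).
  assert (0 <= / p ^ S N) by (left; apply Rinv_0_lt_compat, pow_lt; lra).
  assert (/ p ^ S N * Cmod (r (S N)) <= eps / (B + 1) * B) by
    (apply Rmult_le_compat; auto; [apply Cmod_ge_0 | lra]).
  assert (eps / (B + 1) * B < eps).
  { destruct eps as [e He']. simpl in *. apply (Rmult_lt_reg_r (B + 1)). lra.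
    field_simplify; lra. }
  lra.
Qed.
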